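(* Let $\mu=(\mu_1,\dots,\mu_r)$ be a partition with $\mu_1\ge\cdots\ge\mu_r>0$. Then $\mu$ is both $2$-regular and a $4$-core if and only if exactly one of the following holds: (i) $\mu_r=1$ and there exists $0\le s\le r-1$ such that $\mu_i-\mu_{i+1}=3$ for all $1\le i\le s$ and $\mu_i-\mu_{i+1}=1$ for all $s+1\le i\le r-1$; (ii) $\mu_r\in\{2,3\}$ and $\mu_i-\mu_{i+1}=3$ for all $1\le i\le r-1$.
   Context: A partition is $2$-regular if no two nonzero parts are equal. A partition is a $4$-core if no hook length of its Young diagram is divisible by $4$. *)

(* Defs.v *)
(* Partitions as seq nat (parts listed in order, 0-indexed). *)
From mathcomp Require Import all_boot.
Set Implicit Arguments. Unset Strict Implicit. Unset Printing Implicit Defensive.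

Definition is_partition (mu : seq nat) : bool :=
  sorted geq mu && all (fun x => 0 < x) mu.

Definition two_regular (mu : seq nat) : bool :=
  uniq [seq x <- mu | x != 0].

Definition conj_part (mu : seq nat) (j : nat) : nat := count (fun x => j < x) mu.

(* hook length of cell (i,j) (0-indexed): arm + leg + 1 *)
Definition hook_length (mu : seq nat) (i j : nat) : nat :=
  (nth 0 mu i - j - 1) + (conj_part mu j - i - 1) + 1.

Definition four_core (mu : seq nat) : Prop :=
  forall i j, i < size mu -> j < nth 0 mu i -> ~~ (4 %| hook_length mu i j).

(* Main.v *)
Require Import Defs.
From mathcomp Require Import all_boot.
From Stdlib Require Import Lia.
Set Implicit Arguments. Unset Strict Implicit.

Ltac to_lia := repeat match goal with
  | H : is_true (_ <= _) |- _ => move/leP: H => H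
  | H : is_true (_ == _) |- _ => move/eqP: H => H
  | H : is_true (~~ (_ == _)) |- _ => move/eqP: H => H
  | H : is_true (~~ (_ <= _)) |- _ => rewrite -ltnNge in H
  end.
Ltac slia := intros; to_lia;
  (match goal with |- is_true (_ <= _) => apply/leP | |- is_true (_ == _) => apply/eqP | _ => idtac end);
  unfold addn, subn, muln in *; lia.

Section H.
Variable mu : seq nat.
Hypothesis Hmu : is_partition mu.
Local Notation m := (nth 0 mu).

Lemma mono_step k : m k.+1 <= m k.
Proof.
case/andP: Hmu => Hs _. case: (ltnP k.+1 (size mu)) => Hk.
  exact: (sortedP 0 Hs).
by rewrite (nth_default 0 Hk).
Qed.

Lemma pos k : k < size mu -> 0 < m k.
Proof. case/andP: Hmu => _ /(all_nthP 0) H; exact: H. Qed.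

Lemma mono k p : k <= p -> m p <= m k.
Proof.
elim: p => [|p IH]; first by rewrite leqn0 => /eqP->.
rewrite leq_eqVlt => /orP[/eqP->//|Hk].
exact: leq_trans (mono_step p) (IH Hk).
Qed.

Lemma size_of_pos k : 0 < m k -> k < size mu.
Proof. by case: (ltnP k (size mu)) => // H; rewrite nth_default. Qed.

Lemma conj_eq j p : j < m p -> m p.+1 <= j -> conj_part mu j = p.+1.
Proof.
move=> H1 H2. have Hp : p < size mu by apply: size_of_pos; apply: leq_ltn_trans H1.
rewrite /conj_part -(cat_take_drop p.+1 mu) count_cat.
have -> : count (fun x => j < x) (take p.+1 mu) = p.+1.
  have : all (fun x => j < x) (take p.+1 mu).
    apply/(all_nthP 0) => k; rewrite size_takel // => Hk.
    rewrite nth_take //. have Hkp : k <= p by rewrite -ltnS. have := mono Hkp. move: H1. slia.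
  by rewrite all_count size_takel // => /eqP.
have -> : count (fun x => j < x) (drop p.+1 mu) = 0.
  apply/eqP; rewrite -leqn0 leqNgt -has_count; apply/negP => /(has_nthP 0) [k _].
  rewrite nth_drop => H. have := mono (leq_addr k p.+1).
  move: H; slia.
by rewrite addn0.
Qed.

Lemma find_p i j : j < m i -> exists p, [/\ i <= p, j < m p & m p.+1 <= j].
Proof.
move=> H. have : size mu - i <= size mu - i by [].
move: {2}(size mu - i) => d. elim: d i H => [|d IH] i H Hd.
  have : i < size mu by apply: size_of_pos; apply: leq_ltn_trans H.
  move: Hd; slia.
case: (leqP (m i.+1) j) => Hj; first by exists i.
have [p [Hp1 Hp2 Hp3]] : exists p, [/\ i.+1 <= p, j < m p & m p.+1 <= j].
  apply: IH => //; move: Hd; slia.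
exists p; split=> //; exact: ltnW.
Qed.

Lemma hook_eq i j p : i <= p -> j < m p -> m p.+1 <= j ->
  hook_length mu i j = m i - j + (p - i).
Proof.
move=> H1 H2 H3. rewrite /hook_length (conj_eq H2 H3).
have := mono H1. move: H1 H2; slia.
Qed.


Lemma strict (Hreg : two_regular mu) k : k < size mu -> m k.+1 < m k.
Proof.
move=> Hk.
have Hf : [seq x <- mu | x != 0] = mu.
  apply/all_filterP; apply/(all_nthP 0) => i Hi; rewrite -lt0n; exact: pos.
have Hu : uniq mu by move: Hreg; rewrite /two_regular Hf.
case: (ltnP k.+1 (size mu)) => Hk1; last by rewrite (nth_default 0 Hk1); exact: pos.
have := mono_step k; rewrite leq_eqVlt => /orP[/eqP E|//].
by move: E => /eqP; rewrite nth_uniq // => /eqP /esym /n_Sn.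
Qed.

Lemma nohook4 (Hc : four_core mu) i p j : i <= p -> j < m p -> m p.+1 <= j ->
  m i - j + (p - i) = 4 -> False.
Proof.
move=> H1 H2 H3 E.
have Hj : j < m i by apply: leq_trans H2 (mono H1).
have Hi : i < size mu by apply: size_of_pos; apply: leq_ltn_trans Hj.
by have := Hc i j Hi Hj; rewrite (hook_eq H1 H2 H3) E.
Qed.

End H.

Lemma closed_form (mu : seq nat) a b c :
  (forall i, a <= i -> i < b -> nth 0 mu i = nth 0 mu i.+1 + c) ->
  forall k, a <= k -> k <= b -> nth 0 mu k = nth 0 mu b + c * (b - k).
Proof.
move=> H k Hak Hkb. have : b - k <= b - k by [].
move: {2}(b - k) => d. elim: d k Hak Hkb => [|d IH] k Hak Hkb Hd.
  have -> : k = b by apply/eqP; rewrite eqn_leq Hkb /= -subn_eq0 -leqn0.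
  by rewrite subnn muln0 addn0.
case: (ltnP k b) => Hkb'; last first.
  have -> : k = b by apply/eqP; rewrite eqn_leq Hkb.
  by rewrite subnn muln0 addn0.
rewrite H // (IH k.+1) //; last by move: Hd Hkb'; slia.
  rewrite -addnA; congr (_ + _).
  have -> : b - k = (b - k.+1).+1 by move: Hkb'; slia.
  by rewrite mulnS addnC.
exact: leqW.
Qed.

Theorem lemma4p2 (mu : seq nat) (Hmu : is_partition mu) (Hr : 0 < size mu) :
  let r := size mu in
  let condI :=
    nth 0 mu r.-1 = 1 /\
    exists s, s <= r.-1 /\
      (forall i, i < s -> nth 0 mu i = nth 0 mu i.+1 + 3) /\
      (forall i, s <= i -> i < r.-1 -> nth 0 mu i = nth 0 mu i.+1 + 1) in
  let condII :=
    (nth 0 mu r.-1 = 2 \/ nth 0 mu r.-1 = 3) /\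
    (forall i, i < r.-1 -> nth 0 mu i = nth 0 mu i.+1 + 3) in
  (two_regular mu /\ four_core mu) <->
  ((condI /\ ~ condII) \/ (~ condI /\ condII)).
Proof.
cbv zeta.
have HR : (size mu).-1.+1 = size mu by rewrite prednK.
have HmR : nth 0 mu (size mu).-1.+1 = 0 by rewrite HR nth_default.
have HposR : 0 < nth 0 mu (size mu).-1 by apply: (pos Hmu); rewrite -{2}HR.
split.
- move=> [Hreg Hcore].
  have Hst := strict Hmu Hreg.
  have F1 : forall i, i < size mu -> nth 0 mu i <= nth 0 mu i.+1 + 3.
    move=> i Hi; rewrite leqNgt; apply/negP => H.
    apply: (@nohook4 _ Hmu Hcore i i (nth 0 mu i - 4)); slia.
  have F2 : forall i, i.+1 < size mu -> nth 0 mu i = nth 0 mu i.+1 + 2 -> False.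
    move=> i Hi E. have := Hst i.+1 Hi => H.
    apply: (@nohook4 _ Hmu Hcore i i.+1 (nth 0 mu i - 3)); slia.
  have F3 : forall i, i.+1 < size mu -> nth 0 mu i = nth 0 mu i.+1 + 1 ->
      nth 0 mu i.+2 + 2 <= nth 0 mu i.+1 -> False.
    move=> i Hi E E2.
    apply: (@nohook4 _ Hmu Hcore i i.+1 (nth 0 mu i - 3)); slia.
  pose P n := ((n < (size mu).-1) && (nth 0 mu n == nth 0 mu n.+1 + 1)) || (n == (size mu).-1).
  have exP : exists n, P n by exists (size mu).-1; rewrite /P eqxx orbT.
  case: (ex_minnP exP) => s Ps Hmin.
  have Hs : s <= (size mu).-1 by apply: Hmin; rewrite /P eqxx orbT.
  have H3 : forall i, i < s -> nth 0 mu i = nth 0 mu i.+1 + 3.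
    move=> i Hi. have Hi' : i < (size mu).-1 by slia.
    have : ~ (P i) by move=> /Hmin; slia.
    rewrite /P Hi' /= => /negP; rewrite negb_or => /andP [Hn _].
    have Hi1 : i.+1 < size mu by slia.
    have := F1 i (ltnW Hi1). have := Hst i (ltnW Hi1).
    case: (boolP (nth 0 mu i == nth 0 mu i.+1 + 2)) => [/eqP/(F2 i Hi1)//|].
    move: Hn; slia.
  have exI : forall s', s' <= (size mu).-1 ->
     (forall i, i < s' -> nth 0 mu i = nth 0 mu i.+1 + 3) ->
     (forall i, s' <= i -> i < (size mu).-1 -> nth 0 mu i = nth 0 mu i.+1 + 1) ->
     nth 0 mu (size mu).-1 = 1 ->
     (nth 0 mu (size mu).-1 = 1 /\
      exists s, s <= (size mu).-1 /\
      (forall i, i < s -> nth 0 mu i = nth 0 mu i.+1 + 3) /\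
      (forall i, s <= i -> i < (size mu).-1 -> nth 0 mu i = nth 0 mu i.+1 + 1)).
    move=> s' A B C D; split => //; exists s'; split => //.
  case: (ltnP s (size mu).-1) => Hs'.
  + have H1 : forall i, s <= i -> i < size mu -> nth 0 mu i = nth 0 mu i.+1 + 1.
      elim => [|i IH] Hsi Hi.
        move: Ps Hsi; rewrite leqn0 => + /eqP E; rewrite /P E in Hs' * => /orP [/andP [_ /eqP //]|/eqP E'].
        by move: Hs'; rewrite -E' ltnn.
      case: (boolP (s == i.+1)) => [/eqP E|Hne].
        move: Ps; rewrite /P -E Hs' /= => /orP [/eqP //|/eqP E']. by move: Hs'; rewrite E' ltnn.
      have Hsi' : s <= i by move: Hsi Hne; slia.
      have := IH Hsi' (ltnW Hi) => E.
      have := Hst _ Hi. case: (leqP (nth 0 mu i.+2 + 2) (nth 0 mu i.+1)) => [/(F3 i Hi E)//|]. move: E; slia.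
    left; split.
      apply: (exI s) => //.
        move=> i ? ?; apply: H1 => //; slia.
      have := H1 (size mu).-1 (ltnW Hs') ltac:(slia). move: HmR; slia.
    case=> [[E|E] _]; have := H1 (size mu).-1 (ltnW Hs') ltac:(slia); move: HmR; slia.
  + have Es : s = (size mu).-1 by apply/eqP; rewrite eqn_leq Hs Hs'.
    have Hlt : (size mu).-1 < size mu by rewrite -{2}HR.
    have := F1 _ Hlt. rewrite HmR => Hle.
    case: (boolP (nth 0 mu (size mu).-1 == 1)) => [/eqP E1|Hn1].
    * left; split.
        apply: (exI s) => //; rewrite Es => i ? ?; slia.
      by case=> [[E|E] _]; move: E; rewrite E1.
    * right; split.
        by case=> E _; move: Hn1; rewrite E.
      split; last by rewrite -Es.
      move: Hle HposR Hn1; slia.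
- have Hall : forall (A B : Prop), (A /\ ~ B) \/ (~ A /\ B) -> A \/ B by tauto.
  move=> /Hall H.
  have Hdiff : forall k, k < (size mu).-1 -> nth 0 mu k.+1 < nth 0 mu k.
    move=> k Hk; case: H => [[_ [s [_ [A B]]]]|[_ A]].
      case: (ltnP k s) => Hks; [have := A k Hks|have := B k Hks Hk]; slia.
    have := A k Hk; slia.
  split.
    have Hf : [seq x <- mu | x != 0] = mu.
      apply/all_filterP; apply/(all_nthP 0) => i Hi; rewrite -lt0n; exact: (pos Hmu).
    rewrite /two_regular Hf.
    apply: (@sorted_uniq _ gtn).
      by move=> y x z /= h1 h2; exact: ltn_trans h2 h1.
      by move=> x; rewrite /= ltnn.
    apply/(sortedP 0) => k Hk; apply: Hdiff; slia.
  move=> i j Hi Hj.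
  have [p [H1 H2 H3]] := find_p Hj.
  rewrite (hook_eq Hmu H1 H2 H3); apply/negP => /dvdnP [q Hq].
  have Hp : p < size mu by apply: size_of_pos; apply: leq_ltn_trans H2.
  have Hi' : i <= (size mu).-1 by slia.
  have Hp' : p <= (size mu).-1 by slia.
  case: H => [[E1 [s [Hs [A B]]]]|[E1 A]].
  + have CA := closed_form B. have CB := @closed_form mu 0 s 3 (fun i _ => A i).
    have Fm : forall x, x <= (size mu).-1 ->
        nth 0 mu x = 1 + ((size mu).-1 - x) + 2 * (s - x).
      move=> x Hx. have Ems : nth 0 mu s = 1 + ((size mu).-1 - s).
        by rewrite (CA s) // E1 mul1n.
      case: (leqP x s) => Hxs.
        rewrite (CB x) // Ems; slia.
      rewrite (CA x) //; [rewrite E1; slia| exact: ltnW].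
    have Fi := Fm i Hi'. have Fp := Fm p Hp'.
    case: (ltnP p (size mu).-1) => Hpl.
      have Fp1 := Fm p.+1 Hpl. move: Hq H2 H3 H1 Fi Fp Fp1 Hpl; slia.
    have Hp1 : nth 0 mu p.+1 = 0 by rewrite nth_default //; slia.
    move: Hq H2 H3 H1 Fi Fp Hp1 Hpl; slia.
  + have C := @closed_form mu 0 (size mu).-1 3 (fun i _ => A i).
    have Fi := C i isT Hi'. have Fp := C p isT Hp'.
    case: (ltnP p (size mu).-1) => Hpl.
      have Fp1 := C p.+1 isT Hpl. move: Hq H2 H3 H1 Fi Fp Fp1 Hpl E1; slia.
    have Hp1 : nth 0 mu p.+1 = 0 by rewrite nth_default //; slia.
    move: Hq H2 H3 H1 Fi Fp Hp1 Hpl E1; slia.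
Qed.
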